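(* Let $G=(V,E,w)$ be a connected weighted graph with $n$ vertices, let $e\in E$, and let $k\in\mathbb{R}$. Then $$ \sum_{\{s,t\}\subseteq V}\Big((\widetilde\partial 1_e)^{T}(L^{+})^{k}(1_s-1_t)\Big)^{2}=n\cdot w_e\cdot\big(H^{(2k)}_{e}\big)^{2}, $$ where the sum is over unordered pairs of distinct vertices.
   Context: $G=(V,E,w)$ is undirected with positive edge weights. Each edge is given an arbitrary fixed orientation; the boundary matrix $\partial\in\mathbb{R}^{|V|\times|E|}$ has column $\partial 1_e=1_s-1_t$ for $e=(s,t)$, where $1_x$ is the indicator vector of $x$. $W$ is the diagonal weight matrix, $\widetilde\partial=\partial W^{1/2}$, and $L=\widetilde\partial\widetilde\partial^{T}$ is the graph Laplacian with spectral decomposition $L=\sum_i\lambda_i x_ix_i^{T}$. For $k\in\mathbb{R}$, $(L^{+})^{k}:=\sum_{i:\lambda_i>0}\lambda_i^{-k}x_ix_i^{T}$ (so $(L^+)^0$ is the orthogonal projection onto $\mathrm{im}(L)$). The $k$-harmonic distance is $H^{(k)}_{st}=\sqrt{(1_s-1_t)^{T}(L^{+})^{k}(1_s-1_t)}$, and $H^{(k)}_e:=H^{(k)}_{st}$ for $e=\{s,t\}$. *)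

(* Defs.v *)
From HB Require Import structures.
From mathcomp Require Import all_boot all_order all_algebra.
From mathcomp Require Import reals exp.
Set Implicit Arguments. Unset Strict Implicit. Unset Printing Implicit Defensive.
Import Order.TTheory GRing.Theory Num.Theory.
Local Open Scope ring_scope.

(* A weighted graph on vertex set 'I_n with m edges; edge j : 'I_m has a
   fixed orientation (src j, tgt j) and weight w j. *)
Section Graph.
Variables (R : realType) (n m : nat).
Variables (src tgt : 'I_m -> 'I_n) (w : 'I_m -> R).

Definition simple_weighted_graph : Prop :=
  (forall j, src j != tgt j) /\
  (forall j1 j2, j1 != j2 -> [set src j1; tgt j1] != [set src j2; tgt j2]) /\
  (forall j, 0 < w j).

Definition adj : rel 'I_n := fun u v =>
  [exists j, ((src j == u) && (tgt j == v)) || ((src j == v) && (tgt j == u))].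

Definition connected_graph : Prop := forall u v : 'I_n, connect adj u v.

Definition boundary : 'M[R]_(n, m) :=
  \matrix_(i, j) (((i == src j)%:R : R) - (i == tgt j)%:R).

Definition wboundary : 'M[R]_(n, m) :=
  boundary *m diag_mx (\row_j Num.sqrt (w j)).

Definition laplacian : 'M[R]_n := wboundary *m wboundary^T.
End Graph.

Definition ind (R : realType) (p : nat) (x : 'I_p) : 'cV[R]_p := delta_mx x 0.

Definition chi (R : realType) (n : nat) (s t : 'I_n) : 'cV[R]_n :=
  ind R s - ind R t.

Definition spectral_decomposition (R : realType) (n : nat)
    (L : 'M[R]_n) (lam : 'I_n -> R) (X : 'M[R]_n) : Prop :=
  X^T *m X = 1%:M /\
  L = \sum_i lam i *: (col i X *m (col i X)^T).

Definition pinv_pow (R : realType) (n : nat) (lam : 'I_n -> R) (X : 'M[R]_n)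
    (k : R) : 'M[R]_n :=
  \sum_(i | 0 < lam i) (lam i `^ (- k)) *: (col i X *m (col i X)^T).

Definition harmonic_dist (R : realType) (n : nat) (lam : 'I_n -> R)
    (X : 'M[R]_n) (k : R) (s t : 'I_n) : R :=
  Num.sqrt (((chi R s t)^T *m pinv_pow lam X k *m chi R s t) 0 0).

(* Main.v *)
Require Import Defs.
From HB Require Import structures.
From mathcomp Require Import all_boot all_order all_algebra.
From mathcomp Require Import reals exp.
From mathcomp Require Import ring.
Import Order.TTheory GRing.Theory Num.Theory.
Local Open Scope ring_scope.

Section Aux.
Variables (R : realType) (n : nat).

Lemma sum_pairs (u : 'I_n -> R) :
  \sum_(s < n) \sum_(t < n | (s < t)%N) (u s - u t) ^+ 2
  = n%:R * \sum_s u s ^+ 2 - (\sum_s u s) ^+ 2.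
Proof.
set A := (X in X = _).
have H1 : \sum_(s < n) \sum_(t < n) (u s - u t) ^+ 2 = A + A.
  have HB : A = \sum_(s < n) \sum_(t < n) (if (t < s)%N then (u s - u t) ^+ 2 else 0).
    rewrite exchange_big /A; apply: eq_bigr => s _.
    rewrite big_mkcond; apply: eq_bigr => t _.
    by case: ifP => //; rewrite -opprB sqrrN.
  rewrite {2}HB /A; symmetry; rewrite -big_split /=; symmetry; apply: eq_bigr => s _.
  rewrite [in RHS]big_mkcond /= -big_split; apply: eq_bigr => t _ /=.
  case: (ltngtP s t) => [h|h|h]; rewrite ?addr0 ?add0r //.
  by rewrite (val_inj h) subrr expr0n.
have H2 : \sum_(s < n) \sum_(t < n) (u s - u t) ^+ 2
   = (n%:R * \sum_s u s ^+ 2 - (\sum_s u s) ^+ 2) *+ 2.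
  transitivity (\sum_(s < n) \sum_(t < n) (u s ^+ 2 + u t ^+ 2 - (u s * u t) *+ 2)).
    by apply: eq_bigr => s _; apply: eq_bigr => t _; rewrite sqrrB; ring.
  rewrite (eq_bigr (fun s : 'I_n => n%:R * u s ^+ 2 + \sum_t u t ^+ 2 - (u s * \sum_t u t) *+ 2)); last first.
    move=> s _; rewrite big_split /= sumrN big_split /= sumr_const card_ord.
    by rewrite sumrMnl -mulr_sumr mulr_natl.
  rewrite sumrB big_split /= sumr_const card_ord sumrMnl -mulr_suml -mulr_sumr.
  move: (\sum_(i < n) u i ^+ 2) (\sum_(i < n) u i) => a b.
  rewrite -[a *+ n]mulr_natl !mulr2n; move: (n%:R : R) => N; ring.
have : (A - (n%:R * \sum_s u s ^+ 2 - (\sum_s u s) ^+ 2)) *+ 2 = 0.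
  by rewrite mulrnBl -H2 H1 mulr2n subrr.
by move/eqP; rewrite mulrn_eq0 /= subr_eq0 => /eqP.
Qed.
End Aux.

Section Spec.
Variables (R : realType) (n : nat) (lam : 'I_n -> R) (X : 'M[R]_n).
Hypothesis HX : X^T *m X = 1%:M.
Let x i := col i X.

Lemma xTx i j : (x i)^T *m x j = (i == j)%:R%:M.
Proof.
apply/matrixP => a b; rewrite !ord1 !mxE.
have := congr1 (fun M : 'M[R]_n => M i j) HX; rewrite !mxE => <-.
by apply: eq_bigr => k _; rewrite !mxE.
Qed.

Lemma xTx0 i j : i != j -> (x i)^T *m x j = 0.
Proof.
by move=> ij; rewrite xTx; apply/matrixP => a b; rewrite !mxE (negbTE ij) mul0rn.
Qed.

Definition PP (f : 'I_n -> R) : 'M[R]_n :=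
  \sum_(i | 0 < lam i) f i *: (x i *m (x i)^T).

Lemma PP_mul f g : PP f *m PP g = PP (fun i => f i * g i).
Proof.
rewrite /PP mulmx_suml; apply: eq_bigr => i li.
rewrite mulmx_sumr (bigD1 i) //= big1 ?addr0.
  by rewrite -scalemxAl -scalemxAr scalerA mulmxA -(mulmxA (x i)) xTx eqxx mulmx1.
move=> j /andP [_ ji].
by rewrite -scalemxAl -scalemxAr mulmxA -(mulmxA (x i)) xTx0 1?eq_sym // mulmx0 mul0mx !scaler0.
Qed.

Lemma PP_tr f : (PP f)^T = PP f.
Proof.
rewrite /PP raddf_sum; apply: eq_bigr => i _.
change ((f i *: (x i *m (x i)^T))^T = f i *: (x i *m (x i)^T)).
apply/matrixP => a b; rewrite !mxE; congr (_ * _); apply: eq_bigr => k _; by rewrite !mxE mulrC.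
Qed.
End Spec.
Arguments PP {R n} lam X f.

Lemma sum_ind (R : realType) (n : nat) (s : 'I_n) :
  \sum_(i < n) ((i == s)%:R : R) = 1.
Proof.
by rewrite (bigD1 s) //= eqxx big1 ?addr0 // => i /negbTE ->.
Qed.

Lemma ones_wb (R : realType) (n m : nat) (src tgt : 'I_m -> 'I_n) (w : 'I_m -> R) :
  (const_mx 1 : 'rV[R]_n) *m wboundary src tgt w = 0.
Proof.
rewrite /wboundary mulmxA; suff -> : (const_mx 1 : 'rV[R]_n) *m boundary R src tgt = 0 by rewrite mul0mx.
apply/matrixP => a j; rewrite !mxE.
rewrite (eq_bigr (fun i => (i == src j)%:R - (i == tgt j)%:R)); last by move=> i _; rewrite !mxE mul1r.
by rewrite sumrB !sum_ind subrr.
Qed.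

Lemma ones_x (R : realType) (n m : nat) (src tgt : 'I_m -> 'I_n) (w : 'I_m -> R)
   (lam : 'I_n -> R) (X : 'M[R]_n) :
  spectral_decomposition (laplacian src tgt w) lam X ->
  forall i, 0 < lam i -> (col i X)^T *m (const_mx 1 : 'cV[R]_n) = 0.
Proof.
move=> [HX HL] i li.
have Lx : laplacian src tgt w *m col i X = lam i *: col i X.
  rewrite HL mulmx_suml (bigD1 i) //= big1 ?addr0.
    by rewrite -scalemxAl -mulmxA xTx // eqxx mulmx1.
  by move=> j ji; rewrite -scalemxAl -mulmxA xTx0 // mulmx0 scaler0.
have h : (const_mx 1 : 'rV[R]_n) *m col i X = 0.
  have : (const_mx 1 : 'rV[R]_n) *m (laplacian src tgt w *m col i X) = 0.
by rewrite /laplacian !mulmxA -(mulmxA _ _ (diag_mx _)) -/(wboundary src tgt w) ones_wb !mul0mx.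
  rewrite Lx -scalemxAr => /eqP; rewrite scaler_eq0 (gt_eqF li) /= => /eqP //.
by rewrite -trmx_const -trmx_mul h trmx0.
Qed.

Theorem theorem6p1 (R : realType) (n m : nat)
    (src tgt : 'I_m -> 'I_n) (w : 'I_m -> R)
    (lam : 'I_n -> R) (X : 'M[R]_n) (e : 'I_m) (k : R) :
  simple_weighted_graph src tgt w ->
  connected_graph src tgt ->
  spectral_decomposition (laplacian src tgt w) lam X ->
  \sum_(s < n) \sum_(t < n | (s < t)%N)
     (((wboundary src tgt w *m ind R e)^T *m pinv_pow lam X k *m chi R s t) 0 0) ^+ 2
  = n%:R * w e * (harmonic_dist lam X (2 * k) (src e) (tgt e)) ^+ 2.
Proof.
move=> [_ [_ wpos]] _ Hsp; have [HX HL] := Hsp.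
have PE : pinv_pow lam X k = PP lam X (fun i => lam i `^ (- k)) by [].
have P2E : pinv_pow lam X (2 * k) = PP lam X (fun i => lam i `^ (- k) * lam i `^ (- k)).
  rewrite /pinv_pow /PP; apply: eq_bigr => i li; congr (_ *: _).
  rewrite -powRD; last by apply/implyP => _; rewrite gt_eqF.
  by congr (_ `^ _); ring.
set b := wboundary src tgt w *m ind R e.
have bE : b = Num.sqrt (w e) *: chi R (src e) (tgt e).
  rewrite /b /wboundary /ind -colE mul_mx_diag; apply/matrixP => i j.
  by rewrite !ord1 !mxE eqxx !andbT mulrC.
set P := pinv_pow lam X k.
set u := b^T *m P.
have term s t : (u *m chi R s t) 0 0 = u 0 s - u 0 t.
  by rewrite /chi /ind mulmxBr -!colE !mxE.
rewrite (eq_bigr (fun s : 'I_n => \sum_(t < n | (s < t)%N) (u 0 s - u 0 t) ^+ 2)); last first.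
  by move=> s _; apply: eq_bigr => t _; rewrite term.
rewrite sum_pairs.
have sum0 : \sum_s u 0 s = 0.
  have : (u *m (const_mx 1 : 'cV[R]_n)) 0 0 = \sum_s u 0 s.
    by rewrite !mxE; apply: eq_bigr => s _; rewrite !mxE mulr1.
  move=> <-; rewrite /u -mulmxA /P PE /PP mulmx_suml big1 ?mulmx0 ?mxE //.
  by move=> i li; rewrite -scalemxAl -mulmxA (@ones_x _ _ _ _ _ _ _ _ Hsp i li) mulmx0 scaler0.
have sq (c : 'cV[R]_n) : \sum_s ((c^T *m P) 0 s) ^+ 2 = (c^T *m pinv_pow lam X (2 * k) *m c) 0 0.
  have -> : c^T *m pinv_pow lam X (2 * k) *m c = (c^T *m P) *m (c^T *m P)^T.
    by rewrite P2E -PP_mul // trmx_mul trmxK /P PE PP_tr // !mulmxA.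
  by rewrite !mxE; apply: eq_bigr => s _; rewrite !mxE expr2.
rewrite sum0 expr0n /= subr0 /u sq.
rewrite /harmonic_dist sqr_sqrtr; last first.
  by rewrite -sq; apply: sumr_ge0 => s _; apply: sqr_ge0.
have bT : b^T = Num.sqrt (w e) *: (chi R (src e) (tgt e))^T.
  by rewrite bE; apply/matrixP => i j; rewrite !mxE.
have sE (a : R) (M : 'M[R]_1) : (a *: M) 0 0 = a * M 0 0 by rewrite mxE.
rewrite bT bE -!scalemxAl -scalemxAr !sE.
by rewrite (mulrA (Num.sqrt (w e))) -expr2 sqr_sqrtr ?(ltW (wpos e)) // mulrA.
Qed.
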